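(* Let $G$ be a classical subgroup of $\mathrm{GL}(N+1,\mathbb{C})$ (for instance $G=\mathrm{SL}(N+1,\mathbb{C})$), let $V$ and $W$ be finite-dimensional rational complex representations of $G$ equipped with Hermitian norms $\|\cdot\|$, and let $v\in V\setminus\{0\}$, $w\in W\setminus\{0\}$. Define $p_{v,w}:G\to\mathbb{R}$ by $p_{v,w}(\sigma)=\log\|\sigma(w)\|^2-\log\|\sigma(v)\|^2$. Then $p_{v,w}$ is proper along every one-parameter subgroup of $G$ (i.e. $p_{v,w}(\lambda(t))\to+\infty$ as $t\to0$ for every one-parameter subgroup $\lambda$) if and only if $(v,w)$ is numerically stable; and $p_{v,w}$ is bounded from below along every one-parameter subgroup of $G$ (i.e. $p_{v,w}(\lambda(t))$ is bounded below as $t\to0$ for every one-parameter subgroup $\lambda$) if and only if $(v,w)$ is numerically semistable.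
   Context: A one-parameter subgroup of $G$ is a non-trivial algebraic group homomorphism $\lambda:\mathbb{C}^*\to G$. For a representation $V$, $x\in V\setminus\{0\}$ and a one-parameter subgroup $\lambda$, the weight $w_\lambda(x)$ is the unique integer such that $\lim_{\alpha\to0}\alpha^{-w_\lambda(x)}\lambda(\alpha)x$ exists in $V$ and is non-zero. The pair $(v,w)$ is numerically semistable if $w_\lambda(w)\le w_\lambda(v)$ for all one-parameter subgroups $\lambda$ of $G$, and numerically stable if $w_\lambda(w)<w_\lambda(v)$ for all one-parameter subgroups $\lambda$ of $G$. *)

(* Defs.v *)
From HB Require Import structures.
From mathcomp Require Import all_boot all_order all_algebra.
From mathcomp Require Import complex.
From mathcomp Require Import boolp classical_sets reals exp.

Set Implicit Arguments.
Unset Strict Implicit.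
Unset Printing Implicit Defensive.

Import Order.TTheory GRing.Theory Num.Theory.
Local Open Scope ring_scope.

Definition cabs (R : rcfType) (z : R[i]) : R :=
  Num.sqrt (complex.Re z ^+ 2 + complex.Im z ^+ 2).

Inductive polyfun (R : rcfType) (k : nat) : ('M[R[i]]_k -> R[i]) -> Prop :=
  | pf_const (c : R[i]) : polyfun (fun _ => c)
  | pf_coord (i j : 'I_k) : polyfun (fun A => A i j)
  | pf_add f g : polyfun f -> polyfun g -> polyfun (fun A => f A + g A)
  | pf_mul f g : polyfun f -> polyfun g -> polyfun (fun A => f A * g A).

(** G is a linear algebraic group: a subgroup of GL(k, C) which is
    Zariski closed (common zero set in GL(k,C) of polynomial functions). *)
Definition algebraic_subgroup (R : rcfType) (k : nat)
    (G : set 'M[R[i]]_k) : Prop :=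
  [/\ forall g, G g -> g \in unitmx,
      G 1%:M,
      (forall g h, G g -> G h -> G (g *m h)),
      (forall g, G g -> G (invmx g)) &
      exists F : set ('M[R[i]]_k -> R[i]),
        (forall f, F f -> polyfun f) /\
        (forall g, G g <-> (g \in unitmx /\ forall f, F f -> f g = 0))].

Definition regular_on (R : rcfType) (k : nat) (G : set 'M[R[i]]_k)
    (f : 'M[R[i]]_k -> R[i]) : Prop :=
  exists P, polyfun P /\ exists e : nat,
    forall g, G g -> f g = P g / (\det g) ^+ e.

Definition rational_rep (R : rcfType) (k n : nat) (G : set 'M[R[i]]_k)
    (rho : 'M[R[i]]_k -> 'M[R[i]]_n) : Prop :=
  [/\ forall g, G g -> rho g \in unitmx,
      (forall g h, G g -> G h -> rho (g *m h) = rho g *m rho h) &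
      forall i j, regular_on G (fun g => rho g i j)].

(** one-parameter subgroup: non-trivial algebraic group homomorphism
    C^* -> G (entries are Laurent polynomials in alpha) *)
Definition one_param_subgroup (R : rcfType) (k : nat) (G : set 'M[R[i]]_k)
    (lam : R[i] -> 'M[R[i]]_k) : Prop :=
  [/\ forall a, a != 0 -> G (lam a),
      (forall a b, a != 0 -> b != 0 -> lam (a * b) = lam a *m lam b),
      (forall i j, exists (p : {poly R[i]}) (e : nat),
          forall a, a != 0 -> lam a i j = p.[a] / a ^+ e) &
      exists a, a != 0 /\ lam a != 1%:M].

Definition is_weight (R : rcfType) (k n : nat)
    (rho : 'M[R[i]]_k -> 'M[R[i]]_n) (lam : R[i] -> 'M[R[i]]_k)
    (x : 'cV[R[i]]_n) (w : int) : Prop :=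
  exists y : 'cV[R[i]]_n, y != 0 /\
    forall eps : R, 0 < eps -> exists2 delta : R, 0 < delta &
      forall a : R[i], a != 0 -> cabs a < delta ->
        forall i, cabs (a ^ (- w) * (rho (lam a) *m x) i 0 - y i 0) < eps.

Definition num_semistable (R : rcfType) (k n m : nat) (G : set 'M[R[i]]_k)
    (rV : 'M[R[i]]_k -> 'M[R[i]]_n) (rW : 'M[R[i]]_k -> 'M[R[i]]_m)
    (v : 'cV[R[i]]_n) (w : 'cV[R[i]]_m) : Prop :=
  forall lam, one_param_subgroup G lam ->
    forall a b : int, is_weight rV lam v a -> is_weight rW lam w b -> b <= a.

Definition num_stable (R : rcfType) (k n m : nat) (G : set 'M[R[i]]_k)
    (rV : 'M[R[i]]_k -> 'M[R[i]]_n) (rW : 'M[R[i]]_k -> 'M[R[i]]_m)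
    (v : 'cV[R[i]]_n) (w : 'cV[R[i]]_m) : Prop :=
  forall lam, one_param_subgroup G lam ->
    forall a b : int, is_weight rV lam v a -> is_weight rW lam w b -> b < a.

(** Hermitian norm on C^n given by a Hermitian positive-definite matrix H:
    ||x||^2 = x^* H x *)
Definition hnorm2 (R : rcfType) (n : nat) (H : 'M[R[i]]_n) (x : 'cV[R[i]]_n)
    : R := complex.Re (((map_mx conjc x)^T *m H *m x) 0 0).

Definition hermitian_pd (R : rcfType) (n : nat) (H : 'M[R[i]]_n) : Prop :=
  H^T = map_mx conjc H /\ forall x : 'cV[R[i]]_n, x != 0 -> 0 < hnorm2 H x.

Definition p_vw (R : realType) (k n m : nat)
    (rV : 'M[R[i]]_k -> 'M[R[i]]_n) (rW : 'M[R[i]]_k -> 'M[R[i]]_m)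
    (HV : 'M[R[i]]_n) (HW : 'M[R[i]]_m)
    (v : 'cV[R[i]]_n) (w : 'cV[R[i]]_m) (sigma : 'M[R[i]]_k) : R :=
  ln (hnorm2 HW (rW sigma *m w)) - ln (hnorm2 HV (rV sigma *m v)).

Definition proper_along (R : realType) (k : nat) (f : 'M[R[i]]_k -> R)
    (lam : R[i] -> 'M[R[i]]_k) : Prop :=
  forall M : R, exists2 delta : R, 0 < delta &
    forall t : R[i], t != 0 -> cabs t < delta -> M < f (lam t).

Definition bounded_below_along (R : realType) (k : nat) (f : 'M[R[i]]_k -> R)
    (lam : R[i] -> 'M[R[i]]_k) : Prop :=
  exists M : R, exists2 delta : R, 0 < delta &
    forall t : R[i], t != 0 -> cabs t < delta -> M <= f (lam t).

(* Main.v *)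
Require Import Defs.
From HB Require Import structures.
From mathcomp Require Import all_boot all_order all_algebra.
From mathcomp Require Import complex.
From mathcomp Require Import boolp classical_sets reals exp.
From mathcomp Require Import ring lra zify.
Set Implicit Arguments.
Unset Strict Implicit.
Unset Printing Implicit Defensive.
Import Order.TTheory GRing.Theory Num.Theory.
Local Open Scope ring_scope.


Section Cabs.
Variable R : realType.
Local Notation C := (R[i]).

Lemma cabsE (z : C) : `|z| = ((cabs z)%:C)%C.
Proof. by rewrite normc_def. Qed.

Lemma cabs_ge0 (z : C) : 0 <= cabs z.
Proof. by rewrite /cabs sqrtr_ge0. Qed.

Lemma cabsM (x y : C) : cabs (x * y) = cabs x * cabs y.
Proof. by apply: (@complexI R); rewrite rmorphM /= -!cabsE normrM. Qed.

Lemma cabsD (x y : C) : cabs (x + y) <= cabs x + cabs y.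
Proof. by rewrite -lecR rmorphD /= -!cabsE ler_normD. Qed.

Lemma cabsN (x : C) : cabs (- x) = cabs x.
Proof. by apply: (@complexI R); rewrite -!cabsE normrN. Qed.

Lemma cabsB (x y : C) : cabs (x - y) = cabs (y - x).
Proof. by rewrite -cabsN opprB. Qed.

Lemma cabs0 : cabs (0 : C) = 0.
Proof. by rewrite /cabs /= expr0n /= addr0 sqrtr0. Qed.

Lemma cabs_eq0 (x : C) : (cabs x == 0) = (x == 0).
Proof. by rewrite -[x == 0]normr_eq0 cabsE eq_complex /= eqxx andbT. Qed.

Lemma cabs_gt0 (x : C) : x != 0 -> 0 < cabs x.
Proof. by move=> hx; rewrite lt_neqAle cabs_ge0 andbT eq_sym cabs_eq0. Qed.

Lemma cabsC (k : R) : 0 <= k -> cabs (k%:C)%C = k.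
Proof. by move=> hk; apply: (@complexI R); rewrite -cabsE ger0_norm // ler0c. Qed.

Lemma cabsJ (x : C) : cabs (conjc x) = cabs x.
Proof. by apply: (@complexI R); rewrite -!cabsE normcJ. Qed.

Lemma cabs_Re (x : C) : `|complex.Re x| <= cabs x.
Proof. by rewrite -lecR -cabsE normc_ge_Re. Qed.

Lemma cabsX (x : C) n : cabs (x ^+ n) = cabs x ^+ n.
Proof. by apply: (@complexI R); rewrite rmorphXn /= -!cabsE normrX. Qed.

Lemma cabsV (x : C) : cabs (x^-1) = (cabs x)^-1.
Proof. by apply: (@complexI R); rewrite fmorphV /= -!cabsE normfV. Qed.

Lemma cabsXz (x : C) (w : int) : cabs (x ^ w) = cabs x ^ w.
Proof.
case: w => n; first by rewrite -!exprnP cabsX.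
by rewrite NegzE -!exprnN cabsV cabsX.
Qed.

Lemma ReB (u v : C) : complex.Re (u - v) = complex.Re u - complex.Re v.
Proof. by case: u v => [? ?] [? ?]. Qed.

Lemma ReMC (k : R) (z : C) : complex.Re ((k%:C)%C * z) = k * complex.Re z.
Proof. case: z => x y /=; by rewrite !mul0r subr0. Qed.

End Cabs.


Section Cv.
Variable R : realType.
Local Notation C := (R[i]).

Definition cv0 (f : C -> C) (L : C) := forall e : R, 0 < e ->
  exists2 d : R, 0 < d & forall a, a != 0 -> cabs a < d -> cabs (f a - L) < e.

Lemma cv0_ext f g L : cv0 f L -> (forall a, a != 0 -> f a = g a) -> cv0 g L.
Proof.
move=> hf fg e he; have [d hd H] := hf e he; exists d => // a a0 ad.
by rewrite -fg // H.
Qed.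

Lemma cv0_cst c : cv0 (fun _ => c) c.
Proof. by move=> e he; exists 1 => // a _ _; rewrite subrr cabs0. Qed.

Lemma cv0_id : cv0 id 0.
Proof. by move=> e he; exists e => // a _; rewrite subr0. Qed.

Lemma cv0_add f g L M : cv0 f L -> cv0 g M -> cv0 (fun a => f a + g a) (L + M).
Proof.
move=> hf hg e he; have he2 : 0 < e / 2 by rewrite divr_gt0.
have [d1 hd1 H1] := hf _ he2; have [d2 hd2 H2] := hg _ he2.
exists (Num.min d1 d2); first by rewrite lt_min hd1 hd2.
move=> a a0; rewrite lt_min => /andP[a1 a2].
have -> : f a + g a - (L + M) = (f a - L) + (g a - M) by ring.
apply: (le_lt_trans (cabsD _ _)).
have := H1 a a0 a1; have := H2 a a0 a2; lra.
Qed.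

Lemma cv0_opp f L : cv0 f L -> cv0 (fun a => - f a) (- L).
Proof.
move=> hf e he; have [d hd H] := hf e he; exists d => // a a0 ad.
by rewrite -opprD cabsN H.
Qed.

Lemma cv0_conj f L : cv0 f L -> cv0 (fun a => conjc (f a)) (conjc L).
Proof.
move=> hf e he; have [d hd H] := hf e he; exists d => // a a0 ad.
by rewrite -rmorphB cabsJ H.
Qed.

Lemma cv0_mul0 f g : cv0 f 0 -> cv0 g 0 -> cv0 (fun a => f a * g a) 0.
Proof.
move=> hf hg e he.
have [d1 hd1 H1] := hf _ he; have [d2 hd2 H2] := hg _ ltr01.
exists (Num.min d1 d2); first by rewrite lt_min hd1 hd2.
move=> a a0; rewrite lt_min => /andP[a1 a2].
have := H1 a a0 a1; have := H2 a a0 a2; rewrite !subr0 cabsM => h2 h1.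
have g0 := cabs_ge0 (g a); have f0 := cabs_ge0 (f a).
nra.
Qed.

Lemma cv0_scale0 c f : cv0 f 0 -> cv0 (fun a => c * f a) 0.
Proof.
move=> hf e he.
have hc : 0 < cabs c + 1 by have := cabs_ge0 c; lra.
have [d hd H] := hf (e / (cabs c + 1)) (divr_gt0 he hc).
exists d => // a a0 ad; have := H a a0 ad; rewrite !subr0 cabsM.
rewrite ltr_pdivlMr // => h.
have f0 := cabs_ge0 (f a); have c0 := cabs_ge0 c; nra.
Qed.

Lemma cv0_sub0 f L : cv0 f L <-> cv0 (fun a => f a - L) 0.
Proof.
split=> hf e he; have [d hd H] := hf e he; exists d => // a a0 ad.
  by rewrite subr0 H.
by have := H a a0 ad; rewrite subr0.
Qed.

Lemma cv0_mul f g L M : cv0 f L -> cv0 g M -> cv0 (fun a => f a * g a) (L * M).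
Proof.
move=> /cv0_sub0 hf /cv0_sub0 hg; apply/cv0_sub0.
have h := cv0_add (cv0_add (cv0_mul0 hf hg) (cv0_scale0 L hg)) (cv0_scale0 M hf).
rewrite !addr0 in h; apply: (cv0_ext h) => a _; ring.
Qed.

Lemma cv0_sum I (r : seq I) (F : I -> C -> C) (L : I -> C) :
  (forall i, cv0 (F i) (L i)) ->
  cv0 (fun a => \sum_(i <- r) F i a) (\sum_(i <- r) L i).
Proof.
move=> hF; elim: r => [|i r IH].
  by rewrite big_nil; apply: (cv0_ext (cv0_cst 0)) => a _; rewrite big_nil.
rewrite big_cons; apply: (cv0_ext (cv0_add (hF i) IH)) => a _.
by rewrite big_cons.
Qed.

Lemma cv0_poly (q : {poly C}) : cv0 (fun a => q.[a]) q.[0].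
Proof.
elim/poly_ind: q => [|q c IH].
  by rewrite horner0; apply: (cv0_ext (cv0_cst 0)) => a _; rewrite horner0.
rewrite hornerMXaddC; apply: (cv0_ext (cv0_add (cv0_mul IH cv0_id) (cv0_cst c))).
by move=> a _; rewrite hornerMXaddC.
Qed.

Lemma fin_delta (I : finType) (P : I -> R -> Prop) :
  (forall i d d', 0 < d' -> d' <= d -> P i d -> P i d') ->
  (forall i, exists2 d, 0 < d & P i d) -> exists2 d, 0 < d & forall i, P i d.
Proof.
move=> mono hP.
suff [d hd H] : exists2 d, 0 < d & forall i, i \in enum I -> P i d.
  by exists d => // i; apply: H; rewrite mem_enum.
elim: (enum I) => [|i s [d hd H]]; first by exists 1.
have [d1 hd1 H1] := hP i.
exists (Num.min d1 d); first by rewrite lt_min hd1 hd.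
move=> j; rewrite inE => /orP[/eqP -> | js].
  by apply: (mono _ d1); rewrite ?lt_min ?hd1 ?hd ?ge_min ?lexx.
by apply: (mono _ d); rewrite ?lt_min ?hd1 ?hd ?ge_min ?lexx ?orbT //; apply: H.
Qed.

End Cv.


Section Hn.
Variable R : realType.
Local Notation C := (R[i]).

Lemma hform n (H : 'M[C]_n) (x : 'cV[C]_n) :
  ((map_mx conjc x)^T *m H *m x) 0 0 =
  \sum_k (\sum_l conjc (x l 0) * H l k) * x k 0.
Proof.
rewrite mxE; apply: eq_bigr => k _; rewrite mxE; congr (_ * _).
by apply: eq_bigr => l _; rewrite !mxE.
Qed.

Lemma hnorm2Z n (H : 'M[C]_n) (c : C) (x : 'cV[C]_n) :
  hnorm2 H (c *: x) = cabs c ^+ 2 * hnorm2 H x.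
Proof.
rewrite /hnorm2 !hform -ReMC; congr complex.Re.
rewrite rmorphXn /= -cabsE sqr_normc mulr_sumr; apply: eq_bigr => k _.
rewrite mxE (eq_bigr (fun l => conjc c * (conjc (x l 0) * H l k))) => [|l _]; last first.
  by rewrite mxE rmorphM mulrA.
rewrite -mulr_sumr; ring.
Qed.

Lemma hnorm_cv n (H : 'M[C]_n) (z : C -> 'cV[C]_n) (y : 'cV[C]_n) :
  (forall i, cv0 (fun a => z a i 0) (y i 0)) ->
  forall e : R, 0 < e -> exists2 d : R, 0 < d & forall a, a != 0 ->
    cabs a < d -> `|hnorm2 H (z a) - hnorm2 H y| < e.
Proof.
move=> hz.
have hq : cv0 (fun a => ((map_mx conjc (z a))^T *m H *m (z a)) 0 0)
              (((map_mx conjc y)^T *m H *m y) 0 0).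
  rewrite hform; apply: (cv0_ext _ (fun a _ => esym (hform H (z a)))).
  apply: cv0_sum => k; apply: cv0_mul (hz k); apply: cv0_sum => l.
  exact: cv0_mul (cv0_conj (hz l)) (cv0_cst _).
move=> e he; have [d hd Hd] := hq e he; exists d => // a a0 ad.
rewrite /hnorm2 -ReB; exact: le_lt_trans (cabs_Re _) (Hd a a0 ad).
Qed.

Lemma weight_bounds k n (rho : 'M[C]_k -> 'M[C]_n) lam
    (x : 'cV[C]_n) (w : int) (H : 'M[C]_n) :
  is_weight rho lam x w -> hermitian_pd H ->
  exists2 h : R, 0 < h & exists2 d : R, 0 < d & forall a, a != 0 -> cabs a < d ->
    h / 2 * (cabs a ^ w) ^+ 2 <= hnorm2 H (rho (lam a) *m x) <=
    2 * h * (cabs a ^ w) ^+ 2.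
Proof.
move=> [y [y0 hy]] [_ hpd].
pose z a := a ^ (- w) *: (rho (lam a) *m x).
have hz : forall i, cv0 (fun a => z a i 0) (y i 0).
  move=> i e he; have [d hd Hd] := hy e he; exists d => // a a0 ad.
  by rewrite /z mxE; apply: Hd.
have hy0 := hpd y y0; set h := hnorm2 H y in hy0 *.
exists h => //; have [d hd Hd] := hnorm_cv H hz (divr_gt0 hy0 (ltr0n R 2)).
exists d => // a a0 ad.
have -> : rho (lam a) *m x = a ^ w *: z a.
  by rewrite /z scalerA -expfzDr // subrr expr0z scale1r.
rewrite hnorm2Z cabsXz.
have := Hd a a0 ad; rewrite ltr_norml => /andP[h1 h2].
have p0 : 0 <= (cabs a ^ w) ^+ 2 by rewrite exprn_even_ge0.
apply/andP; split; nra.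
Qed.

End Hn.


Section Laur.
Variable R : realType.
Local Notation C := (R[i]).

Definition laur (f : C -> C) := exists (p : {poly C}) (e : nat),
  forall a, a != 0 -> f a = p.[a] / a ^+ e.

Lemma laur_ext f g : laur f -> (forall a, a != 0 -> f a = g a) -> laur g.
Proof. by move=> [p [e h]] fg; exists p, e => a a0; rewrite -fg // h. Qed.

Lemma laur_cst c : laur (fun _ => c).
Proof. by exists c%:P, 0%N => a _; rewrite hornerC expr0 divr1. Qed.

Lemma laur_X : laur (fun a => a).
Proof. by exists 'X, 0%N => a _; rewrite hornerX expr0 divr1. Qed.

Lemma laur_invX : laur (fun a => a^-1).
Proof. by exists 1, 1%N => a _; rewrite hornerC expr1 div1r. Qed.

Lemma laur_add f g : laur f -> laur g -> laur (fun a => f a + g a).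
Proof.
move=> [p [e hp]] [q [e' hq]].
exists (p * 'X^e' + q * 'X^e), (e + e')%N => a a0.
rewrite hp // hq // hornerD !hornerM !hornerXn exprD; field.
by rewrite !expf_neq0.
Qed.

Lemma laur_mul f g : laur f -> laur g -> laur (fun a => f a * g a).
Proof.
move=> [p [e hp]] [q [e' hq]].
exists (p * q), (e + e')%N => a a0.
rewrite hp // hq // hornerM exprD; field.
by rewrite !expf_neq0.
Qed.

Lemma laur_exp f m : laur f -> laur (fun a => f a ^+ m).
Proof.
move=> hf; elim: m => [|m IH].
  by apply: laur_ext (laur_cst 1) _ => a _; rewrite expr0.
by apply: laur_ext (laur_mul hf IH) _ => a _; rewrite exprS.
Qed.

Lemma laur_sum I (r : seq I) (F : I -> C -> C) :
  (forall i, laur (F i)) -> laur (fun a => \sum_(i <- r) F i a).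
Proof.
move=> hF; elim: r => [|i r IH].
  by apply: laur_ext (laur_cst 0) _ => a _; rewrite big_nil.
by apply: laur_ext (laur_add (hF i) IH) _ => a _; rewrite big_cons.
Qed.

Lemma laur_prod I (r : seq I) (F : I -> C -> C) :
  (forall i, laur (F i)) -> laur (fun a => \prod_(i <- r) F i a).
Proof.
move=> hF; elim: r => [|i r IH].
  by apply: laur_ext (laur_cst 1) _ => a _; rewrite big_nil.
by apply: laur_ext (laur_mul (hF i) IH) _ => a _; rewrite big_cons.
Qed.

Lemma laur_polyfun k (lam : C -> 'M[C]_k) (P : 'M[C]_k -> C) :
  (forall i j, laur (fun a => lam a i j)) -> polyfun P ->
  laur (fun a => P (lam a)).
Proof.
move=> hl; elim=> [c|i j|f g _ hf _ hg|f g _ hf _ hg].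
- exact: laur_cst.
- exact: hl.
- exact: laur_add hf hg.
- exact: laur_mul hf hg.
Qed.

Lemma laur_det k (lam : C -> 'M[C]_k) :
  (forall i j, laur (fun a => lam a i j)) -> laur (fun a => \det (lam a)).
Proof.
move=> hl; apply: laur_sum => s; apply: laur_mul; first exact: laur_cst.
by apply: laur_prod => i; apply: hl.
Qed.

Lemma factorX (I : finType) (P : I -> {poly C}) :
  (exists i, P i != 0) ->
  exists (k : nat) (q : I -> {poly C}),
    (forall i, P i = q i * 'X^k) /\ exists i, (q i).[0] != 0.
Proof.
move: (leqnn (\sum_i size (P i))); move: {2}(\sum_i size (P i)) => s.
elim: s P => [|s IH] P hs [i0 hi0].
  move: hs; rewrite leqn0 => /eqP hs.
  have : size (P i0) == 0%N.
    by rewrite -leqn0 -hs (bigD1 i0) //= leq_addr.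
  by rewrite size_poly_eq0 (negbTE hi0).
have [[i hi]|] := pselect (exists i, (P i).[0] != 0).
  by exists 0%N, P; split=> [j|]; [rewrite expr0 mulr1 | exists i].
move=> hn; have hr : forall i, root (P i) 0.
  by move=> i; apply/negPn/negP => hi; apply: hn; exists i.
pose P' i := P i %/ 'X.
have hP : forall i, P i = P' i * 'X.
  move=> i; rewrite /P' divpK //.
  by have := hr i; rewrite -dvdp_XsubCl polyC0 subr0.
have hi0' : P' i0 != 0 by apply: contra hi0; rewrite hP => /eqP ->; rewrite mul0r.
have hs' : (\sum_i size (P' i) <= s)%N.
  rewrite -ltnS; apply: (leq_trans _ hs).
  rewrite [X in (_ < X)%N](bigD1 i0) //= [X in (X < _)%N](bigD1 i0) //=.
  rewrite hP size_mulX // addSn ltnS leq_add2l; apply: leq_sum => i _.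
  rewrite hP; have [->|h] := eqVneq (P' i) 0; first by rewrite mul0r size_poly0.
  by rewrite size_mulX.
have [k [q [hq hq0]]] := IH P' hs' (ex_intro _ i0 hi0').
exists k.+1, q; split=> // i; by rewrite hP hq exprSr mulrA.
Qed.

Lemma monomial (d : {poly C}) :
  d != 0 -> (forall a, a != 0 -> d.[a] != 0) ->
  exists (c : C) (k : nat), c != 0 /\ d = c%:P * 'X^k.
Proof.
move=> d0 hd.
have [k [q [hq [i hi]]]] := @factorX 'I_1 (fun _ => d) (ex_intro _ ord0 d0).
have hq0 : forall a, (q i).[a] != 0.
  move=> a; have [->|a0] := eqVneq a 0; first by [].
  have := hd a a0; rewrite (hq i) hornerM; apply: contra => /eqP ->.
  by rewrite mul0r.
have : size (q i) == 1%N.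
  by apply/negPn/negP => /closed_rootP [a /rootP ha]; have := hq0 a; rewrite ha eqxx.
move=> /eqP hs; exists (q i)`_0, k; split.
  apply: contra hi => /eqP h.
  by rewrite (size1_polyC (eq_leq hs)) h hornerC.
by rewrite (hq i) -(size1_polyC (eq_leq hs)).
Qed.

End Laur.


Section W.
Variable R : realType.
Local Notation C := (R[i]).

Lemma weight_vec n (X : C -> 'cV[C]_n) :
  (forall i, laur (fun a => X a i 0)) -> X 1 != 0 ->
  exists (w : int) (y : 'cV[C]_n), y != 0 /\
    forall eps : R, 0 < eps -> exists2 delta : R, 0 < delta &
      forall a : C, a != 0 -> cabs a < delta ->
        forall i, cabs (a ^ (- w) * X a i 0 - y i 0) < eps.
Proof.
move=> hX X1.
have : forall i, exists pe : {poly C} * nat,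
    forall a, a != 0 -> X a i 0 = pe.1.[a] / a ^+ pe.2.
  by move=> i; have [p [e h]] := hX i; exists (p, e).
move=> /fin_all_exists [f hf].
pose E := (\sum_i (f i).2)%N.
pose P i := (f i).1 * 'X^(E - (f i).2).
have hE : forall i a, a != 0 -> X a i 0 = (P i).[a] / a ^+ E.
  move=> i a a0; rewrite hf // hornerM hornerXn.
  have hle : ((f i).2 <= E)%N by rewrite /E (bigD1 i) //= leq_addr.
  rewrite -{2}(subnKC hle) exprD; field; by rewrite !expf_neq0.
have hP : exists i, P i != 0.
  apply/not_existsP => hn; move/eqP: X1; apply; apply/matrixP => i j.
  rewrite ord1 !mxE hE ?oner_neq0 //.
  by have /negP/negPn/eqP -> := hn i; rewrite horner0 mul0r.
have [k [q [hq [i0 hi0]]]] := factorX hP.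
exists (k%:Z - E%:Z), (\col_i (q i).[0]); split.
  apply: contra hi0 => /eqP /matrixP /(_ i0 0); rewrite !mxE => ->.
  by rewrite eqxx.
move=> eps he.
suff [d hd Hd] : exists2 d, 0 < d & forall i (a : C), a != 0 -> cabs a < d ->
        cabs (a ^ (- (k%:Z - E%:Z)) * X a i 0 - (\col_i (q i).[0]) i 0) < eps.
  by exists d => // a a0 ad i; apply: Hd.
apply: (@fin_delta _ _ (fun i d => forall a : C, a != 0 -> cabs a < d ->
        cabs (a ^ (- (k%:Z - E%:Z)) * X a i 0 - (\col_i (q i).[0]) i 0) < eps)).
  by move=> i d d' _ hdd' h a a0 ad; apply: h a a0 (lt_le_trans ad hdd').
move=> i; have [d hd Hd] := cv0_poly (q i) he; exists d => // a a0 ad.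
rewrite mxE; have <- : (q i).[a] = a ^ (- (k%:Z - E%:Z)) * X a i 0.
  rewrite hE // hq hornerM hornerXn opprB expfzDr // -exprnP -exprnN.
  field; by rewrite !expf_neq0.
exact: Hd.
Qed.

End W.


Section WE.
Variable R : realType.
Local Notation C := (R[i]).

Lemma weight_exists k n (G : set 'M[C]_k) (rho : 'M[C]_k -> 'M[C]_n) lam
    (x : 'cV[C]_n) :
  (forall g, G g -> g \in unitmx) ->
  rational_rep G rho -> one_param_subgroup G lam -> x != 0 ->
  exists w, is_weight rho lam x w.
Proof.
move=> hGu [hru _ hreg] [hlG _ hll _] x0.
have hl : forall i j, laur (fun a => lam a i j).
  by move=> i j; have [p [e h]] := hll i j; exists p, e.
have hdet : laur (fun a => (\det (lam a))^-1).
  have [p [e hp]] := laur_det hl.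
  have hd0 : forall a, a != 0 -> \det (lam a) != 0.
    by move=> a a0; rewrite -unitfE -unitmxE; apply: hGu; apply: hlG.
  have hp0 : forall a, a != 0 -> p.[a] != 0.
    move=> a a0; have := hd0 a a0; rewrite hp //; apply: contra => /eqP ->.
    by rewrite mul0r.
  have p0 : p != 0.
    by apply: contra (hp0 1 (oner_neq0 _)) => /eqP ->; rewrite horner0.
  have [c [m [c0 hpc]]] := monomial p0 hp0.
  apply: (laur_ext (laur_mul (laur_mul (laur_cst c^-1) (laur_exp e (laur_X R)))
                     (laur_exp m (laur_invX R)))).
  move=> a a0; rewrite hp // hpc hornerM hornerC hornerXn exprVn.
  field; by rewrite c0 !expf_neq0.
have hent : forall i j, laur (fun a => rho (lam a) i j).
  move=> i j; have [P [hPf [e hPe]]] := hreg i j.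
  apply: (laur_ext (laur_mul (laur_polyfun hl hPf) (laur_exp e hdet))).
  move=> a a0; rewrite hPe; last exact: hlG.
  by congr (_ * _); exact: exprVn.
have hX : forall i, laur (fun a => (rho (lam a) *m x) i 0).
  move=> i; apply: (laur_ext (laur_sum (index_enum _)
           (fun j => laur_mul (hent i j) (laur_cst (x j 0))))).
  by move=> a _; rewrite mxE.
have hX1 : rho (lam 1) *m x != 0.
  apply: contra x0 => /eqP h.
  have hu := hru _ (hlG 1 (oner_neq0 _)).
  by rewrite -(mulKmx hu x) h mulmx0.
have [w [y [y0 hy]]] := @weight_vec R n (fun a => rho (lam a) *m x) hX hX1.
by exists w, y; split.
Qed.

End WE.


Section Fin.
Variable R : realType.
Local Notation C := (R[i]).

Lemma lnzpow (r : R) (z : int) : 0 < r -> ln (r ^ z) = z%:~R * ln r.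
Proof.
move=> r0; case: z => n.
  by rewrite -exprnP lnXn // -mulr_natl.
rewrite NegzE -exprnN lnV ?posrE ?exprn_gt0 //.
by rewrite lnXn // mulrNz -mulr_natl mulNr.
Qed.

Lemma key k n m (rV : 'M[C]_k -> 'M[C]_n)
    (rW : 'M[C]_k -> 'M[C]_m) lam HV HW v w (a b : int) :
  hermitian_pd HV -> hermitian_pd HW ->
  is_weight rV lam v a -> is_weight rW lam w b ->
  exists c1 c2 : R, exists2 d : R, 0 < d & forall t : C, t != 0 -> cabs t < d ->
    c1 + 2 * (b - a)%:~R * ln (cabs t) <= p_vw rV rW HV HW v w (lam t) <=
    c2 + 2 * (b - a)%:~R * ln (cabs t).
Proof.
move=> hHV hHW ha hb.
have [hv hv0 [dv dv0 Hv]] := weight_bounds ha hHV.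
have [hw hw0 [dw dw0 Hw]] := weight_bounds hb hHW.
exists (ln (hw / 2) - ln (2 * hv)), (ln (2 * hw) - ln (hv / 2)).
exists (Num.min dv dw); first by rewrite lt_min dv0 dw0.
move=> t t0; rewrite lt_min => /andP[tv tw].
have r0 := cabs_gt0 t0; set r := cabs t in r0 Hv Hw *.
have /andP[v1 v2] := Hv t t0 tv; have /andP[w1 w2] := Hw t t0 tw.
have qa : 0 < (r ^ a) ^+ 2 by rewrite exprn_gt0 // exprz_gt0.
have qb : 0 < (r ^ b) ^+ 2 by rewrite exprn_gt0 // exprz_gt0.
have la : ln ((r ^ a) ^+ 2) = 2 * a%:~R * ln r.
  by rewrite lnXn ?exprz_gt0 // lnzpow // mulr_natl mulrnAl.
have lb : ln ((r ^ b) ^+ 2) = 2 * b%:~R * ln r.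
  by rewrite lnXn ?exprz_gt0 // lnzpow // mulr_natl mulrnAl.
have pos : forall x y : R, 0 < x -> 0 < y -> 0 < x * y by move=> *; rewrite mulr_gt0.
have h2 : (0 : R) < 2 by [].
have hv2 : 0 < hv / 2 by rewrite divr_gt0.
have hw2 : 0 < hw / 2 by rewrite divr_gt0.
have NV0 : 0 < hnorm2 HV (rV (lam t) *m v) by apply: lt_le_trans v1; apply: (pos).
have NW0 : 0 < hnorm2 HW (rW (lam t) *m w) by apply: lt_le_trans w1; apply: (pos).
have q1 : 0 < hv / 2 * (r ^ a) ^+ 2 by apply: (pos).
have q2 : 0 < 2 * hv * (r ^ a) ^+ 2 by apply: (pos) => //; apply: (pos).
have q3 : 0 < hw / 2 * (r ^ b) ^+ 2 by apply: (pos).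
have q4 : 0 < 2 * hw * (r ^ b) ^+ 2 by apply: (pos) => //; apply: (pos).
have lv1 : ln (hv / 2 * (r ^ a) ^+ 2) <= ln (hnorm2 HV (rV (lam t) *m v)).
  by rewrite ler_ln ?posrE.
have lv2 : ln (hnorm2 HV (rV (lam t) *m v)) <= ln (2 * hv * (r ^ a) ^+ 2).
  by rewrite ler_ln ?posrE.
have lw1 : ln (hw / 2 * (r ^ b) ^+ 2) <= ln (hnorm2 HW (rW (lam t) *m w)).
  by rewrite ler_ln ?posrE.
have lw2 : ln (hnorm2 HW (rW (lam t) *m w)) <= ln (2 * hw * (r ^ b) ^+ 2).
  by rewrite ler_ln ?posrE.
have hvp : 0 < 2 * hv by apply: (pos).
have hwp : 0 < 2 * hw by apply: (pos).
rewrite lnM ?posrE // la in lv1; rewrite lnM ?posrE // la in lv2.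
rewrite lnM ?posrE // lb in lw1; rewrite lnM ?posrE // lb in lw2.
rewrite /p_vw intrD intrN.
apply/andP; split; lra.
Qed.

End Fin.


Lemma ln_small (R : realType) (u : R) :
  exists2 d : R, 0 < d & forall r, 0 < r -> r < d -> ln r < u.
Proof.
exists (sequences.expR u); first exact: expR_gt0.
move=> r r0 rd; rewrite -[u](expRK) ltr_ln // posrE; exact: expR_gt0.
Qed.

Lemma small_pt (R : realType) (d : R) : 0 < d ->
  exists t : R[i], t != 0 /\ cabs t < d.
Proof.
move=> d0; exists ((d / 2)%:C)%C; split.
  by rewrite eq_complex /= negb_and (lt0r_neq0 _) //= divr_gt0.
rewrite cabsC; last by rewrite ltW // divr_gt0.
lra.
Qed.

Lemma ln_lt0' (R : realType) (r : R) : 0 < r -> r < 1 -> ln r < 0.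
Proof. by move=> r0 r1; apply: ln_lt0; rewrite r0 r1. Qed.

Unset Implicit Arguments.
Theorem theorem4p3 (R : realType) (N : nat) (G : set 'M[R[i]]_N.+1)
    (hG : algebraic_subgroup G)
    (n m : nat) (rV : 'M[R[i]]_N.+1 -> 'M[R[i]]_n)
    (rW : 'M[R[i]]_N.+1 -> 'M[R[i]]_m)
    (hrV : rational_rep G rV) (hrW : rational_rep G rW)
    (HV : 'M[R[i]]_n) (HW : 'M[R[i]]_m)
    (hHV : hermitian_pd HV) (hHW : hermitian_pd HW)
    (v : 'cV[R[i]]_n) (w : 'cV[R[i]]_m) (hv : v != 0) (hw : w != 0) :
  ((forall lam, one_param_subgroup G lam ->
      proper_along (p_vw rV rW HV HW v w) lam)
     <-> num_stable G rV rW v w) /\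
  ((forall lam, one_param_subgroup G lam ->
      bounded_below_along (p_vw rV rW HV HW v w) lam)
     <-> num_semistable G rV rW v w).
Proof.
have hGu : forall g, G g -> g \in unitmx by case: hG.
split; split.
- move=> Hp lam hl a b ha hb.
  rewrite ltNge; apply/negP => hab.
  have hD : 0 <= (b - a)%:~R :> R by rewrite ler0z subr_ge0.
  have [c1 [c2 [d d0 Hd]]] := key hHV hHW ha hb.
  have [de de0 Hde] := Hp lam hl c2.
  have hpos : 0 < Num.min (Num.min d de) 1 by rewrite !lt_min d0 de0 ltr01.
  have [t [t0 tlt]] := small_pt hpos.
  move: tlt; rewrite !lt_min => /andP[/andP[td tde] t1].
  have /andP[_ h2] := Hd t t0 td; have h3 := Hde t t0 tde.
  have L0 := ln_lt0' (cabs_gt0 t0) t1.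
  have := mulr_ge0_le0 hD (ltW L0); lra.
- move=> Hs lam hl M.
  have [a ha] := weight_exists hGu hrV hl hv.
  have [b hb] := weight_exists hGu hrW hl hw.
  have hba := Hs lam hl a b ha hb.
  have hD : (b - a)%:~R <= -1 :> R.
    have : (b - a + 1)%:~R <= 0 :> R by rewrite lerz0; lia.
    by rewrite intrD; lra.
  have [c1 [c2 [d d0 Hd]]] := key hHV hHW ha hb.
  have [dl dl0 Hdl] := ln_small ((c1 - M) / 2).
  exists (Num.min (Num.min d 1) dl); first by rewrite !lt_min d0 dl0 ltr01.
  move=> t t0; rewrite !lt_min => /andP[/andP[td t1] tdl].
  have /andP[h1 _] := Hd t t0 td.
  have L0 := ln_lt0' (cabs_gt0 t0) t1.
  have L1 := Hdl _ (cabs_gt0 t0) tdl.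
  have hD1 : (b - a)%:~R + 1 <= 0 :> R by lra.
  have := mulr_le0 hD1 (ltW L0); lra.
- move=> Hb lam hl a b ha hb.
  rewrite leNgt; apply/negP => hab.
  have hD : 1 <= (b - a)%:~R :> R by rewrite ler1z; lia.
  have [c1 [c2 [d d0 Hd]]] := key hHV hHW ha hb.
  have [M [de de0 Hde]] := Hb lam hl.
  have [dl dl0 Hdl] := ln_small ((M - c2) / 2).
  have hpos : 0 < Num.min (Num.min d de) (Num.min 1 dl).
    by rewrite !lt_min d0 de0 dl0 ltr01.
  have [t [t0 tlt]] := small_pt hpos.
  move: tlt; rewrite !lt_min => /andP[/andP[td tde] /andP[t1 tdl]].
  have /andP[_ h2] := Hd t t0 td; have h3 := Hde t t0 tde.
  have L0 := ln_lt0' (cabs_gt0 t0) t1.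
  have L1 := Hdl _ (cabs_gt0 t0) tdl.
  have hD1 : 0 <= (b - a)%:~R - 1 :> R by lra.
  have := mulr_ge0_le0 hD1 (ltW L0); lra.
- move=> Hs lam hl.
  have [a ha] := weight_exists hGu hrV hl hv.
  have [b hb] := weight_exists hGu hrW hl hw.
  have hba := Hs lam hl a b ha hb.
  have hD : (b - a)%:~R <= 0 :> R by rewrite lerz0; lia.
  have [c1 [c2 [d d0 Hd]]] := key hHV hHW ha hb.
  exists c1, (Num.min d 1); first by rewrite lt_min d0 ltr01.
  move=> t t0; rewrite lt_min => /andP[td t1].
  have /andP[h1 _] := Hd t t0 td.
  have L0 := ln_lt0' (cabs_gt0 t0) t1.
  have := mulr_le0 hD (ltW L0); lra.
Qed.
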